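(* If $L$ is a regular language, then ${\rm bdr}(L)$ is context-free.
   Context: For a word $w=a_1a_2\cdots a_n$, ${\rm odd}(w)=a_1a_3a_5\cdots$ (letters at odd positions) and ${\rm even}(w)=a_2a_4\cdots$ (letters at even positions). $x^R$ denotes the reversal of $x$. ${\rm bdr}(w)={\rm odd}(w)\,{\rm even}(w)^R$, and ${\rm bdr}(L)=\{{\rm bdr}(w):w\in L\}$. *)

(* Defs.v *)
From mathcomp Require Import all_boot.
Unset Printing Implicit Defensive.

Definition lang (A : Type) := seq A -> Prop.

(* odd w = letters at odd positions 1,3,5,... (1-indexed);
   even w = letters at even positions 2,4,... *)
Fixpoint oddw {A : Type} (w : seq A) : seq A :=
  match w with [::] => [::] | a :: w' => a :: evenw w' end
with evenw {A : Type} (w : seq A) : seq A :=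
  match w with [::] => [::] | _ :: w' => oddw w' end.

Definition bdr {A : Type} (w : seq A) : seq A := oddw w ++ rev (evenw w).

Definition bdr_lang {A : Type} (L : lang A) : lang A :=
  fun v => exists w, L w /\ v = bdr w.

Record dfa (A : finType) := DFA {
  dfa_state : finType;
  dfa_s : dfa_state;
  dfa_trans : dfa_state -> A -> dfa_state;
  dfa_fin : pred dfa_state }.

Definition dfa_accept (A : finType) (M : dfa A) (w : seq A) : bool :=
  @dfa_fin A M (foldl (@dfa_trans A M) (@dfa_s A M) w).

Definition regular (A : finType) (L : lang A) : Prop :=
  exists M : dfa A, forall w, L w <-> dfa_accept A M w.

Record cfg (A : finType) := CFG {
  cfg_nt : finType;
  cfg_start : cfg_nt;
  cfg_rules : seq (cfg_nt * seq (cfg_nt + A)) }.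

Definition cfg_step (A : finType) (G : cfg A) (u v : seq (cfg_nt A G + A)) : Prop :=
  exists (x y : seq (cfg_nt A G + A)) (X : cfg_nt A G) (rhs : seq (cfg_nt A G + A)),
    (X, rhs) \in cfg_rules A G /\ u = x ++ inl X :: y /\ v = x ++ rhs ++ y.

Inductive cfg_derives (A : finType) (G : cfg A) :
    seq (cfg_nt A G + A) -> seq (cfg_nt A G + A) -> Prop :=
  | cfg_derives_refl u : cfg_derives A G u u
  | cfg_derives_step u v w : cfg_step A G u v -> cfg_derives A G v w -> cfg_derives A G u w.

Definition cfg_lang (A : finType) (G : cfg A) : lang A :=
  fun w => cfg_derives A G [:: inl (cfg_start A G)] (map inr w).

Definition context_free (A : finType) (L : lang A) : Prop :=
  exists G : cfg A, forall w, L w <-> cfg_lang A G w.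

(* Main.v *)
Require Import Defs.
From mathcomp Require Import all_boot.
From mathcomp Require Import zify.

Lemma oddw_cat (A : Type) (u v : seq A) :
  oddw (u ++ v) = oddw u ++ (if odd (size u) then evenw v else oddw v)
  /\ evenw (u ++ v) = evenw u ++ (if odd (size u) then oddw v else evenw v).
Proof.
elim: u => [|a u [IHo IHe]] /=; first by [].
by rewrite IHo IHe; case: (odd (size u)).
Qed.

Arguments oddw_cat {A} u v.

Lemma bdr_cons2 (A : Type) (a b : A) u : bdr [:: a, b & u] = a :: bdr u ++ [:: b].
Proof. by rewrite /bdr /= rev_cons -cats1 catA. Qed.

Lemma no_inl (T U : eqType) (r : seq U) x y (X : T) :
  map (@inr T U) r <> x ++ inl X :: y.
Proof.
move=> H; have : inl X \in map (@inr T U) r by rewrite H mem_cat in_cons eqxx orbT.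
by case/mapP => z _ E; discriminate E.
Qed.

Arguments no_inl {T U r x y X}.

Lemma decomp (T U : eqType) (o r : seq U) (Q X : T) x y :
  map inr o ++ inl Q :: map inr r = x ++ inl X :: y ->
  x = map inr o /\ X = Q /\ y = map inr r.
Proof.
elim: o x => [|c o IH] [|e x] /=.
- by case=> -> <-; do !split.
- by case=> _ H; exfalso; apply: (no_inl H).
- by case.
- by case=> <- /IH [-> [-> ->]]; do !split.
Qed.

Arguments decomp {T U o r Q X x y}.

Lemma derives_ctx (A : finType) (G : cfg A) x y u v :
  cfg_derives A G u v -> cfg_derives A G (x ++ u ++ y) (x ++ v ++ y).
Proof.
elim => [u'|u1 v1 w1 [x' [y' [X [rhs [Hr [-> ->]]]]]] _ IH]; first by constructor.
apply: cfg_derives_step IH.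
exists (x ++ x'), (y' ++ y), X, rhs; split => //; split; by rewrite -!catA.
Qed.

Section Constr.
Variables (A : finType) (M : dfa A).
Local Notation S := (dfa_state A M).
Local Notation d := (@dfa_trans A M).
Local Notation F := (@dfa_fin A M).

Definition rules : seq (S * seq (S + A)) :=
  [seq (p, [::]) | p <- enum {: S} & F p] ++
  [seq (x.1, [:: inr x.2]) | x <- enum {: S * A} & F (d x.1 x.2)] ++
  [seq (x.1, [:: inr x.2.1; inl (d (d x.1 x.2.1) x.2.2); inr x.2.2])
     | x <- enum {: S * (A * A)}].

Definition G : cfg A := @CFG A S (@dfa_s A M) rules.

Lemma rulesP X rhs : (X, rhs) \in rules ->
  (rhs = [::] /\ F X) \/ (exists a, rhs = [:: inr a] /\ F (d X a)) \/
  (exists a b, rhs = [:: inr a; inl (d (d X a) b); inr b]).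
Proof.
rewrite !mem_cat => /or3P [].
- case/mapP => p; rewrite mem_filter => /andP [Fp _] [-> ->]; by left.
- case/mapP => [[p a]]; rewrite mem_filter => /andP [Fp _] [-> ->] /=.
  by right; left; exists a.
- case/mapP => [[p [a b]]] _ [-> ->]. by right; right; exists a, b.
Qed.

Lemma sound u p : F (foldl d p u) ->
  cfg_derives A G [:: inl p] (map inr (bdr u)).
Proof.
have [n] := ubnP (size u); elim: n u p => // n IH [|a [|b u]] p /= Hs Hf.
- eapply cfg_derives_step; last by apply: cfg_derives_refl.
  exists [::], [::], p, [::]; split => //.
  by rewrite mem_cat; apply/orP; left; apply/mapP; exists p;
    rewrite // mem_filter Hf mem_enum.
- eapply cfg_derives_step; last by apply: cfg_derives_refl.
  exists [::], [::], p, [:: inr a]; split => //.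
  rewrite !mem_cat; apply/orP; right; apply/orP; left; apply/mapP; exists (p, a);
    by rewrite // mem_filter /= Hf mem_enum.
- eapply (@cfg_derives_step A G _ ([:: inr a; inl (d (d p a) b); inr b] : seq (cfg_nt A G + A))).
    exists [::], [::], p, [:: inr a; inl (d (d p a) b); inr b]; split => //.
    rewrite !mem_cat; apply/orP; right; apply/orP; right; apply/mapP;
      exists (p, (a, b)); by rewrite // mem_enum.
  rewrite rev_cons -cats1 catA map_cat.
  have Hu : size u < n by lia.
  exact: (derives_ctx A G [:: inr a] [:: inr b] _ _ (IH u _ Hu Hf)).
Qed.

Definition Inv p (s : seq (S + A)) :=
  (exists u, ~~ odd (size u) /\
     s = map inr (oddw u) ++ inl (foldl d p u) :: map inr (rev (evenw u))) \/
  (exists u, F (foldl d p u) /\ s = map inr (bdr u)).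

Lemma inv_step p s s' : Inv p s -> cfg_step A G s s' -> Inv p s'.
Proof.
move=> [[u [Hu ->]] | [u [_ ->]]] [x [y [X [rhs [Hr [Hs ->]]]]]]; last first.
  by exfalso; exact: (no_inl Hs).
case/decomp: Hs => Ex [EX Ey]; subst x y X.
case: (rulesP _ _ Hr) => [[-> HF] | [[a [-> HF]] | [a [b ->]]]].
- by right; exists u; split => //; rewrite /bdr map_cat.
- have [Ho He] := oddw_cat u [:: a].
  right; exists (u ++ [:: a]); rewrite foldl_cat; split => //.
  rewrite /bdr Ho He (negbTE Hu) /= cats0 !map_cat -!catA //.
- have [Ho He] := oddw_cat u [:: a; b].
  left; exists (u ++ [:: a; b]); rewrite size_cat /= oddD (negbTE Hu).
  split => //.
  rewrite Ho He foldl_cat (negbTE Hu) /= rev_cat !map_cat -!catA //.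
Qed.

Lemma inv_derives p s s' : cfg_derives A G s s' -> Inv p s -> Inv p s'.
Proof.
elim => // u v w Hst _ IH Hu; apply: IH; exact: inv_step Hu Hst.
Qed.

Lemma complete w : cfg_lang A G w ->
  exists u, F (foldl d (@dfa_s A M) u) /\ w = bdr u.
Proof.
rewrite /cfg_lang => /(inv_derives (@dfa_s A M)) H.
have : Inv (@dfa_s A M) (map inr w) by apply: H; left; exists [::].
case => [[u [_ E]] | [u [Hf E]]].
- by exfalso; exact: (no_inl E).
- by exists u; split => //; apply: (inj_map _ E) => x1 x2 [].
Qed.

End Constr.

Theorem mainTheorem12 (A : finType) (L : lang A) :
  regular A L -> context_free A (bdr_lang L).
Proof.
move=> [M HM]; exists (@G A M) => w; split.
- by case=> u [Lu ->]; apply: (sound A M); apply/HM.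
- by case/(complete A M) => u [Hf ->]; exists u; split => //; apply/HM.
Qed.
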